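(* Given an LDODOSP instance, let $(S^d,T^d)_{d\in\{1,\dots,D\}}$ be feasible period counters. Then: $T^{l_w}=0$ and $S^{D-l_w+1}=S^D$; $T^{d+l_w}\le S^d$ for all $1\le d\le D-l_w$; $S^d\le T^{d+u_w}$ for all $1\le d\le D-u_w$; $S^1=S^{l_o}$ and $T^{D-l_o+1}=T^D$; $S^{d+l_o}-N\le T^d$ for all $1\le d\le D-l_o$; $T^d+N\le S^{d+u_o}$ for all $1\le d\le D-u_o$; $r_l^d\le S^d-T^d\le r_u^d$ for all $1\le d\le D$.
   Context: An instance of the Days On Days Off Scheduling Problem (DODOSP) consists of integers $D\ge 1$ (days), $N\ge 1$ (workers), bounds $l_w,u_w,l_o,u_o,U_w,U_o\in\mathbb{N}$, and for each day $d\in\{1,\dots,D\}$ integers $0\le r_l^d\le r_u^d\le N$. A schedule is a map $f:\{n_1,\dots,n_N\}\times\{1,\dots,D\}\to\{\mathrm{ON},\mathrm{OFF}\}$ (not cyclic). A work period (resp. off period) of a worker is an inclusion-wise maximal set of consecutive days on which the worker is ON (resp. OFF). A schedule is feasible if on every day $d$ the number of workers that are ON lies in $[r_l^d,r_u^d]$, every work period has length between $l_w$ and $u_w$, every off period has length between $l_o$ and $u_o$, every worker is ON on at most $U_w$ days and OFF on at most $U_o$ days. The LDODOSP is the DODOSP restricted to instances with $U_w=U_o=D$. Integers $(S^d,T^d)_{d\in\{1,\dots,D\}}$ are period counters representing a schedule if for each $d$, $S^d$ is the number of work periods (over all workers) whose first day is among days $1,\dots,d$, and $T^d$ is the number of work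 periods whose last day is among days $1,\dots,d-1$. Period counters are feasible (for a given instance) if they represent a feasible schedule of that instance. *)

(* Defs.v *)
From mathcomp Require Import all_boot all_order all_algebra.
Set Implicit Arguments. Unset Strict Implicit. Unset Printing Implicit Defensive.

(* An instance of the DODOSP.  Days are 1..D, workers are 'I_N. *)
Record instance := Instance {
  D : nat; N : nat;
  lw : nat; uw : nat; lo : nat; uo : nat;
  Uw : nat; Uo : nat;
  rl : nat -> nat; ru : nat -> nat }.

Definition valid_instance (I : instance) : Prop :=
  [/\ 1 <= D I, 1 <= N I &
      forall d, 1 <= d <= D I -> rl I d <= ru I d <= N I].

Definition LDODOSP (I : instance) : Prop :=
  [/\ valid_instance I, Uw I = D I & Uo I = D I].

(* A schedule: true = ON, false = OFF; only days 1..D are relevant. *)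
Definition schedule (I : instance) := 'I_(N I) -> nat -> bool.

Definition period (I : instance) (f : schedule I) (b : bool) (n : 'I_(N I))
  (s e : nat) : Prop :=
  [/\ 1 <= s <= e, e <= D I,
      (forall d, s <= d <= e -> f n d = b),
      (s == 1) || (f n s.-1 != b)
    & (e == D I) || (f n e.+1 != b)].

Definition work_period I f n s e := @period I f true n s e.
Definition off_period I f n s e := @period I f false n s e.

Definition feasible (I : instance) (f : schedule I) : Prop :=
  [/\ (forall d, 1 <= d <= D I ->
         rl I d <= #|[set n | f n d]| <= ru I d),
      (forall n s e, work_period f n s e -> lw I <= e - s + 1 <= uw I),
      (forall n s e, off_period f n s e -> lo I <= e - s + 1 <= uo I),
      (forall n, count (f n) (iota 1 (D I)) <= Uw I)
    & (forall n, count (fun d => ~~ f n d) (iota 1 (D I)) <= Uo I)].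

Definition is_start (I : instance) (f : schedule I) n (s : nat) : bool :=
  [&& 1 <= s, s <= D I, f n s & (s == 1) || ~~ f n s.-1].
Definition is_end (I : instance) (f : schedule I) n (e : nat) : bool :=
  [&& 1 <= e, e <= D I, f n e & (e == D I) || ~~ f n e.+1].

Definition Scount (I : instance) (f : schedule I) (d : nat) : nat :=
  \sum_(n < N I) count (is_start f n) (iota 1 d).
Definition Tcount (I : instance) (f : schedule I) (d : nat) : nat :=
  \sum_(n < N I) count (is_end f n) (iota 1 d.-1).

Definition represents (I : instance) (S T : nat -> nat) (f : schedule I) :=
  forall d, 1 <= d <= D I -> S d = Scount f d /\ T d = Tcount f d.

Definition feasible_counters (I : instance) (S T : nat -> nat) : Prop :=
  exists f : schedule I, feasible f /\ represents S T f.

(* Main.v *)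
Require Import Defs.
From mathcomp Require Import all_boot all_order all_algebra.
From mathcomp Require Import zify.
Set Implicit Arguments. Unset Strict Implicit.
Set Implicit Arguments. Unset Strict Implicit.

Definition Sn I (f : schedule I) n x := count (is_start f n) (iota 1 x).
Definition Tn I (f : schedule I) n x := count (is_end f n) (iota 1 x.-1).

Lemma count_split (p : pred nat) x k :
  count p (iota 1 (x + k)) = count p (iota 1 x) + count p (iota x.+1 k).
Proof. by rewrite iotaD count_cat add1n. Qed.

Lemma count_le1 (p : pred nat) a k :
  (forall i j, a <= i -> i < j -> j < a + k -> p i -> p j -> False) ->
  count p (iota a k) <= 1.
Proof.
elim: k a => [|k IH] a H //=.
case Hpa: (p a) => /=.
- have -> : count p (iota a.+1 k) = 0; last by [].
  apply/eqP; rewrite -leqn0 leqNgt -has_count; apply/hasPn => j.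
  rewrite mem_iota => Hj; apply/negP => Hpj; apply: (H a j) => //; lia.
- apply: IH => i j ? ? ?; apply: H; lia.
Qed.

Lemma count0 (p : pred nat) a k :
  (forall i, a <= i < a + k -> ~~ p i) -> count p (iota a k) = 0.
Proof.
move=> H; apply/eqP; rewrite -leqn0 leqNgt -has_count; apply/hasPn => j.
by rewrite mem_iota; apply: H.
Qed.

Lemma count_pos (p : pred nat) a k i :
  a <= i < a + k -> p i -> 0 < count p (iota a k).
Proof. by move=> Hi Hp; rewrite -has_count; apply/hasP; exists i; rewrite ?mem_iota. Qed.

Lemma run_fwd I (f : schedule I) n b d : 1 <= d <= D I -> f n d = b ->
  exists e, [/\ d <= e, e <= D I, (forall x, d <= x <= e -> f n x = b)
              & (e == D I) || (f n e.+1 != b)].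
Proof.
move=> Hd Hb; move: {2}(D I - d) (erefl (D I - d)) => k.
elim: k d Hd Hb => [|k IH] d Hd Hb Hk.
- exists d; split; [lia|lia| |].
  + by move=> x Hx; have -> : x = d by lia.
  + by apply/orP; left; apply/eqP; lia.
- case Hn: (f n d.+1 == b).
  + have [e [H1 H2 H3 H4]] := IH d.+1 ltac:(lia) (eqP Hn) ltac:(lia).
    exists e; split; [lia|lia| |done].
    move=> x Hx; have [->|Hxd] := eqVneq x d; first done.
    apply: H3; lia.
  + exists d; split; [lia|lia| |].
    * by move=> x Hx; have -> : x = d by lia.
    * by rewrite Hn orbT.
Qed.

Lemma run_bwd I (f : schedule I) n b d : 1 <= d -> f n d = b ->
  exists s, [/\ 1 <= s, s <= d, (forall x, s <= x <= d -> f n x = b)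
              & (s == 1) || (f n s.-1 != b)].
Proof.
elim: d => [|d IH] // Hd Hb.
have [Ed|Hd0] := eqVneq d 0.
- subst d; exists 1; split; [done|done| |done].
  by move=> x Hx; have -> : x = 1 by lia.
- case Hn: (f n d == b).
  + have [s [H1 H2 H3 H4]] := IH ltac:(lia) (eqP Hn).
    exists s; split; [done|lia| |done].
    move=> x Hx; have [->|Hxd] := eqVneq x d.+1; first done.
    apply: H3; lia.
  + exists d.+1; split; [done|done| |].
    * by move=> x Hx; have -> : x = d.+1 by lia.
    * by rewrite /= Hn orbT.
Qed.

Lemma period_of I (f : schedule I) b n d : 1 <= d <= D I -> f n d = b ->
  exists s e, period f b n s e /\ s <= d <= e.
Proof.
move=> Hd Hb.
have [e [E1 E2 E3 E4]] := run_fwd Hd Hb.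
have [s [S1 S2 S3 S4]] := @run_bwd _ f n b d ltac:(lia) Hb.
exists s, e; split; last lia.
split; [lia|lia| |done|done].
move=> x Hx; have [h|h] := leqP x d; [apply: S3 | apply: E3]; lia.
Qed.

Lemma start_of I (f : schedule I) n s : is_start f n s ->
  exists e, period f true n s e.
Proof.
case/and4P => H1 H2 Hs Hc.
have [s' [e [[P1 P2 P3 P4 P5] P6]]] := period_of (b:=true) (n:=n) (d:=s) ltac:(lia) Hs.
have Es : s' = s.
  case/orP: Hc => [/eqP E|Hc]; first lia.
  case: (ltnP s' s) => h; last lia.
  by rewrite (P3 s.-1) in Hc; lia.
subst s'; exists e; split => //.
Qed.

Lemma end_of I (f : schedule I) n e : is_end f n e ->
  exists s, period f true n s e.
Proof.
case/and4P => H1 H2 Hs Hc.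
have [s [e' [[P1 P2 P3 P4 P5] P6]]] := period_of (b:=true) (n:=n) (d:=e) ltac:(lia) Hs.
have Es : e' = e.
  case/orP: Hc => [/eqP E|Hc]; first lia.
  case: (ltnP e e') => h; last lia.
  by rewrite (P3 e.+1) in Hc; lia.
subst e'; exists s; split => //.
Qed.

Lemma off_before I (f : schedule I) n s : is_start f n s -> 2 <= s ->
  exists s', period f false n s' s.-1.
Proof.
case/and4P => H1 H2 Hs Hc H2s.
have Hc' : f n s.-1 = false.
  case/orP: Hc => [/eqP E|/negbTE //]; lia.
have [s' [e' [[P1 P2 P3 P4 P5] P6]]] := period_of (b:=false) (n:=n) (d:=s.-1) ltac:(lia) Hc'.
have Es : e' = s.-1.
  case: (ltnP s.-1 e') => h; last lia.
  by rewrite (P3 s) in Hs; lia.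
subst e'; exists s'; split => //.
Qed.

Lemma off_after I (f : schedule I) n e : is_end f n e -> e < D I ->
  exists e', period f false n e.+1 e'.
Proof.
case/and4P => H1 H2 Hs Hc H2s.
have Hc' : f n e.+1 = false.
  case/orP: Hc => [/eqP E|/negbTE //]; lia.
have [s' [e' [[P1 P2 P3 P4 P5] P6]]] := period_of (b:=false) (n:=n) (d:=e.+1) ltac:(lia) Hc'.
have Es : s' = e.+1.
  case: (ltnP s' e.+1) => h; last lia.
  by rewrite (P3 e) in Hs; lia.
subst s'; exists e'; split => //.
Qed.

Lemma SnTn I (f : schedule I) n x : 1 <= x <= D I -> Sn f n x = Tn f n x + f n x.
Proof.
elim: x => [|x IH] // Hx.
have [E|Hx0] := eqVneq x 0.
- subst x; rewrite /Sn /Tn /= /is_start /=.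
  have -> : 0 < D I by lia.
  by case: (f n 1).
- have IH' := IH ltac:(lia).
  have ES : Sn f n x.+1 = Sn f n x + is_start f n x.+1.
    by rewrite /Sn -(addn1 x) count_split /= addn0 addn1.
  have ET : Tn f n x.+1 = Tn f n x + is_end f n x.
    rewrite /Tn /=; have Hx' : x = x.-1.+1 by lia.
    by rewrite {1}Hx' -(addn1 x.-1) count_split /= addn0 -Hx'.
  rewrite ES ET IH' /is_start /is_end.
  have -> : (1 <= x.+1) = true by lia.
  have -> : (x.+1 <= D I) = true by lia.
  have -> : (1 <= x) = true by lia.
  have -> : (x <= D I) = true by lia.
  have -> : (x.+1 == 1) = false by lia.
  have -> : (x == D I) = false by lia.
  by rewrite /=; case: (f n x); case: (f n x.+1); rewrite /= ?addn0 ?addn1.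
Qed.

Section W.
Context (I : instance) (f : schedule I)
  (Hw : forall n s e, work_period f n s e -> lw I <= e - s + 1 <= uw I)
  (Ho : forall n s e, off_period f n s e -> lo I <= e - s + 1 <= uo I)
  (n : 'I_(N I)).

Lemma W1a : 1 <= lw I -> Tn f n (lw I) = 0.
Proof.
move=> H; rewrite /Tn; apply: count0 => e He; apply/negP => /end_of [s P].
have := Hw P; case: P => *; lia.
Qed.

Lemma W1b : 1 <= lw I <= D I -> Sn f n (D I - lw I + 1) = Sn f n (D I).
Proof.
move=> H; rewrite /Sn.
have E : D I = (D I - lw I + 1) + (lw I - 1) by lia.
rewrite [in RHS]E [in RHS]count_split (count0 (a:=(D I - lw I + 1).+1)) ?addn0 //.
move=> s Hs; apply/negP => /start_of [e P].
have := Hw P; case: P => *; lia.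
Qed.

Lemma W2 d : 1 <= d -> d + lw I <= D I -> Tn f n (d + lw I) <= Sn f n d.
Proof.
move=> H1 H2.
have E := @SnTn I f n (d + lw I) ltac:(lia).
rewrite -(leq_add2r (f n (d + lw I))) -E.
rewrite {1}/Sn count_split -/(Sn f n d) leq_add2l.
have key : forall s, d.+1 <= s < d.+1 + lw I -> is_start f n s ->
   forall x, s <= x <= d + lw I -> f n x.
  move=> s Hs /start_of [e P] x Hx.
  have := Hw P; case: P => P1 P2 P3 P4 P5 Hl.
  apply: P3; lia.
case Hf: (f n (d + lw I)).
- apply: count_le1 => i j Hi Hij Hj Pi Pj.
  have := key i ltac:(lia) Pi j.-1 ltac:(lia).
  case/and4P: Pj => _ _ _ /orP [/eqP|/negbTE ->]; lia.
- rewrite leqn0; apply/eqP; apply: count0 => s Hs; apply/negP => Ps.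
  by have := key s Hs Ps (d + lw I) ltac:(lia); rewrite Hf.
Qed.

Lemma W3 d : 1 <= d -> d + uw I <= D I -> Sn f n d <= Tn f n (d + uw I).
Proof.
move=> H1 H2.
rewrite (@SnTn I f n d) ?H1; last lia.
rewrite /Tn.
have -> : (d + uw I).-1 = d.-1 + uw I by lia.
rewrite count_split leq_add2l.
case Hf: (f n d) => //=.
have [s [e [P Hse]]] := period_of (b:=true) (n:=n) (d:=d) ltac:(lia) Hf.
have := Hw P; case: P => P1 P2 P3 P4 P5 Hl.
apply: (count_pos (i:=e)); first lia.
apply/and4P; split => //; try lia.
by apply: P3; lia.
Qed.

Lemma W4a : 1 <= lo I <= D I -> Sn f n 1 = Sn f n (lo I).
Proof.
move=> H; rewrite /Sn.
have E : lo I = 1 + (lo I - 1) by lia.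
rewrite [in RHS]E [in RHS]count_split (count0 (a:=2)) ?addn0 //.
move=> s Hs; apply/negP => Ps.
have [s' P] := off_before Ps ltac:(lia).
have := Ho P; case: P => *; lia.
Qed.

Lemma W4b : 1 <= lo I <= D I -> Tn f n (D I - lo I + 1) = Tn f n (D I).
Proof.
move=> H; rewrite /Tn.
have E : (D I).-1 = (D I - lo I + 1).-1 + (lo I - 1) by lia.
rewrite [in RHS]E [in RHS]count_split (count0 (a:=(D I - lo I + 1).-1.+1)) ?addn0 //.
move=> e He; apply/negP => Pe.
have [e' P] := off_after Pe ltac:(lia).
have := Ho P; case: P => *; lia.
Qed.

Lemma W5 d : 1 <= d -> d + lo I <= D I -> Sn f n (d + lo I) <= Tn f n d + 1.
Proof.
move=> H1 H2.
rewrite {1}/Sn count_split -/(Sn f n d) (@SnTn I f n d); last lia.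
have key : forall s, d.+1 <= s < d.+1 + lo I -> is_start f n s ->
   forall x, d <= x <= s.-1 -> f n x = false.
  move=> s Hs Ps x Hx.
  have [s' P] := off_before Ps ltac:(lia).
  have := Ho P; case: P => P1 P2 P3 P4 P5 Hl.
  apply: P3; lia.
rewrite -addnA leq_add2l.
case Hf: (f n d) => /=.
- rewrite count0 //.
  move=> s Hs; apply/negP => Ps.
  by have := key s Hs Ps d ltac:(lia); rewrite Hf.
- apply: count_le1 => i j Hi Hij Hj Pi Pj.
  have := key j ltac:(lia) Pj i ltac:(lia).
  by case/and4P: Pi => _ _ ->.
Qed.

Lemma W6 d : 1 <= d -> d + uo I <= D I -> Tn f n d + 1 <= Sn f n (d + uo I).
Proof.
move=> H1 H2.
rewrite {1}/Sn count_split -/(Sn f n d) (@SnTn I f n d); last lia.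
rewrite -addnA leq_add2l.
case Hf: (f n d) => //=.
have [s [e [P Hse]]] := period_of (b:=false) (n:=n) (d:=d) ltac:(lia) Hf.
have := Ho P; case: P => P1 P2 P3 P4 P5 Hl.
have Hfe : f n e = false by apply: P3; lia.
have He1 : f n e.+1.
  case/orP: P5 => [/eqP|]; first lia.
  by case: (f n e.+1).
apply: (count_pos (i:=e.+1)); first lia.
apply/and4P; split => //; try lia.
by rewrite /= Hfe orbT.
Qed.

End W.


Theorem lemma5p6 (I : instance) (S T : nat -> nat) :
  LDODOSP I -> feasible_counters I S T ->
  [/\ (1 <= lw I <= D I -> T (lw I) = 0 /\ S (D I - lw I + 1) = S (D I)),
      (forall d, 1 <= d <= D I - lw I -> T (d + lw I) <= S d),
      (forall d, 1 <= d <= D I - uw I -> S d <= T (d + uw I)),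
      (1 <= lo I <= D I -> S 1 = S (lo I) /\ T (D I - lo I + 1) = T (D I))
    & [/\ (forall d, 1 <= d <= D I - lo I ->
             ((S (d + lo I)%N)%:Z - (N I)%:Z <= (T d)%:Z)%R),
          (forall d, 1 <= d <= D I - uo I -> T d + N I <= S (d + uo I))
        & (forall d, 1 <= d <= D I ->
             ((rl I d)%:Z <= (S d)%:Z - (T d)%:Z <= (ru I d)%:Z)%R)]].
Proof.
move=> [[HD HN _] _ _] [f [[Hcard Hw Ho _ _] Hrep]].
have RS d : 1 <= d <= D I -> S d = \sum_(n < N I) Sn f n d.
  by move=> H; rewrite (Hrep d H).1.
have RT d : 1 <= d <= D I -> T d = \sum_(n < N I) Tn f n d.
  by move=> H; rewrite (Hrep d H).2.
have Hsum d : 1 <= d <= D I -> S d = T d + #|[set n | f n d]|.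
  move=> H; rewrite RS // RT //.
  rewrite (eq_bigr (fun n => Tn f n d + f n d)); last by move=> n _; apply: SnTn.
  rewrite big_split /=; congr (_ + _).
  rewrite cardsE -sum1_card [RHS]big_mkcond /=; apply: eq_bigr => i _.
  by rewrite unfold_in /=; case: (f i d).
split.
- move=> H; rewrite RT ?RS //; try lia; split.
  + by apply: big1 => n _; apply: W1a => //; lia.
  + by apply: eq_bigr => n _; apply: W1b.
- move=> d H; rewrite RT ?RS; try lia.
  by apply: leq_sum => n _; apply: W2 => //; lia.
- move=> d H; rewrite RT ?RS; try lia.
  by apply: leq_sum => n _; apply: W3 => //; lia.
- move=> H; rewrite !RT ?RS; try lia; split.
  + by apply: eq_bigr => n _; apply: W4a.
  + by apply: eq_bigr => n _; apply: W4b.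
split.
- move=> d H.
  have : S (d + lo I) <= T d + N I.
    have -> : T d + N I = \sum_(n < N I) (Tn f n d + 1).
      rewrite big_split /= big_const_ord iter_addn_0 mul1n (RT d) //; lia.
    rewrite RS; last lia.
    by apply: leq_sum => n _; apply: W5 => //; lia.
  lia.
- move=> d H.
  rewrite RT ?RS; try lia.
  have EN : N I = \sum_(n < N I) 1 by rewrite big_const_ord iter_addn_0 mul1n.
    rewrite [X in _ + X]EN -big_split /=.
  by apply: leq_sum => n _; apply: W6 => //; lia.
- move=> d H; have := Hcard d H; rewrite Hsum //; lia.
Qed.
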